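(* For every integer $d\ge 50$, $\displaystyle\sum_{H\in\mathcal{R}(d-1)}\left(\frac{1}{d-|H|}-\frac1d\right)<\frac{1}{18}$.
   Context: For finite sets $A,B\subseteq\mathbb{N}^+$, $A$ precedes $B$ in the colexicographic order if $\max(A\triangle B)\in B$. For $m\in\mathbb{N}$, $\mathcal{R}(m)$ denotes the family of the first $m$ finite subsets of $\mathbb{N}^+$ in the colexicographic order (starting with $\emptyset$). *)

(* Defs.v *)
From HB Require Import structures.
From mathcomp Require Import all_boot all_order all_algebra.
From mathcomp Require Import finmap.
Set Implicit Arguments. Unset Strict Implicit. Unset Printing Implicit Defensive.
Import Order.TTheory GRing.Theory Num.Theory.
Local Open Scope fset_scope.

(* Finite subsets of N^+ are finite sets of naturals not containing 0. *)
Definition posfin (A : {fset nat}) : bool := 0 \notin A.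

(* Colexicographic order: A precedes B iff max (A symdiff B) lies in B,
   i.e. there is m in B \ A such that A and B agree above m. *)
Definition colex_prec (A B : {fset nat}) : Prop :=
  exists2 m, (m \in B) && (m \notin A) &
    forall k, m < k -> (k \in A) = (k \in B).

(* is_R m F : the family F (listed without repetition) is R(m), the family of
   the first m finite subsets of N^+ in colex order: F consists of exactly m
   distinct finite subsets of N^+ and is an initial segment of the colex order. *)
Definition is_R (m : nat) (F : seq {fset nat}) : Prop :=
  [/\ uniq F, size F = m, all posfin F &
      forall A B, posfin A -> B \in F -> colex_prec A B -> A \in F].

(* Main.v *)
Require Import Defs.
From HB Require Import structures.
From mathcomp Require Import all_boot all_order all_algebra.
From mathcomp Require Import finmap.
From mathcomp Require Import zify ring lra.
Import Order.TTheory GRing.Theory Num.Theory.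


Definition bit (i n : nat) : bool := odd (n %/ 2 ^ i).
Definition E (b : nat) (A : {fset nat}) : nat := \sum_(i < b) (i.+1 \in A) * 2 ^ i.

Lemma ES b A : E b.+1 A = E b A + (b.+1 \in A) * 2 ^ b.
Proof. by rewrite /E big_ord_recr. Qed.

Lemma E_lt b A : E b A < 2 ^ b.
Proof.
elim: b => [|b IH]; first by rewrite /E big_ord0.
rewrite ES expnS; case: (_ \in _); rewrite ?mul1n ?mul0n; lia.
Qed.

Lemma E_stable b b' A : (forall i, i \in A -> i <= b) -> b <= b' -> E b' A = E b A.
Proof.
move=> hA; elim: b' => [|b' IH]; first by rewrite leqn0 => /eqP ->.
rewrite leq_eqVlt => /orP [/eqP <- //| hb].
rewrite ES IH; last lia.
case hin: (_ \in _); last by rewrite mul0n addn0.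
by have := hA _ hin; lia.
Qed.

Lemma E_agree b A B : E b A = E b B -> forall k, 0 < k <= b -> (k \in A) = (k \in B).
Proof.
elim: b => [|b IH] h k hk; first lia.
move: h; rewrite !ES => h.
have hA := E_lt b A; have hB := E_lt b B.
have eb : (b.+1 \in A) = (b.+1 \in B).
  by case: (b.+1 \in A) h; case: (b.+1 \in B) => //; lia.
rewrite eb in h; have {}h : E b A = E b B by lia.
case/andP: hk => hk0; rewrite leq_eqVlt => /orP [/eqP -> //|hk].
by apply: IH => //; rewrite hk0.
Qed.

Lemma E_cmp b A B : E b A < E b B ->
  exists m, [/\ 0 < m <= b, m \in B, m \notin A &
     forall k, m < k <= b -> (k \in A) = (k \in B)].
Proof.
elim: b => [|b IH] h; first by move: h; rewrite /E !big_ord0.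
move: h; rewrite !ES => h.
have hA := E_lt b A; have hB := E_lt b B.
case eA: (b.+1 \in A); case eB: (b.+1 \in B); move: h; rewrite eA eB ?mul1n ?mul0n ?addn0 => h.
- have [m [h1 h2 h3 h4]] := IH ltac:(lia).
  exists m; split => //; first lia.
  move=> k hk; case: (ltngtP k b.+1) => hkb; try lia.
    by apply: h4; lia.
  by rewrite hkb eA eB.
- exfalso; lia.
- exists b.+1; split; rewrite ?eA ?eB ?leqnn //.
  move=> k hk; exfalso; lia.
- have [m [h1 h2 h3 h4]] := IH ltac:(lia).
  exists m; split => //; first lia.
  move=> k hk; case: (ltngtP k b.+1) => hkb; try lia.
    by apply: h4; lia.
  by rewrite hkb eA eB.
Qed.
Definition dec (n : nat) : {fset nat} :=
  seq_fset tt [seq i.+1 | i <- iota 0 n & bit i n].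

Lemma bit_small i n : n < 2 ^ i -> bit i n = false.
Proof. by move=> h; rewrite /bit divn_small. Qed.

Lemma mem_dec i n : (i.+1 \in dec n) = bit i n.
Proof.
rewrite /dec seq_fsetE (mem_map succn_inj) mem_filter mem_iota add0n /=.
case hb: (bit i n) => //=.
case: (ltnP i n) => // hin.
by rewrite bit_small in hb => //; apply: leq_ltn_trans hin (ltn_expl _ _).
Qed.

Lemma dec0 n : 0 \notin dec n.
Proof. by rewrite /dec seq_fsetE; apply/mapP => -[]. Qed.

Lemma dec_le k n : k \in dec n -> k <= n.
Proof.
rewrite /dec seq_fsetE => /mapP [i]; rewrite mem_filter mem_iota => /andP [_ /andP [_ h]] ->.
by move: h; rewrite add0n.
Qed.

Lemma modS n b : n %% 2 ^ b.+1 = n %% 2 ^ b + bit b n * 2 ^ b.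
Proof.
rewrite /bit.
have hr := ltn_pmod n (expn_gt0 2 b).
rewrite {1}(divn_eq n (2^b)) -{1}(odd_double_half (n %/ 2^b)).
move: hr; set q := n %/ 2^b; set r := n %% 2^b => hr.
have -> : (odd q + q./2.*2) * 2^b + r = q./2 * 2^b.+1 + (odd q * 2^b + r).
  by rewrite expnS -muln2; ring.
rewrite modnMDl modn_small ?[r + _]addnC //.
by rewrite expnS; case: (odd q); rewrite ?mul1n ?mul0n; lia.
Qed.

Lemma E_dec b n : E b (dec n) = n %% 2 ^ b.
Proof.
elim: b => [|b IH]; first by rewrite /E big_ord0 expn0 modn1.
by rewrite ES mem_dec IH modS.
Qed.

Lemma card_dec n : #|` dec n| = count (bit^~ n) (iota 0 n).
Proof.
rewrite /dec size_seq_fset undup_id ?size_map ?size_filter //.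
by rewrite (map_inj_uniq succn_inj) filter_uniq // iota_uniq.
Qed.
Definition bnd (A : {fset nat}) : nat := \max_(i <- A) i.
Definition enc A := E (bnd A) A.

Lemma bnd_ge A i : i \in A -> i <= bnd A.
Proof. by move=> h; rewrite /bnd (leq_bigmax_seq (F := id) i h). Qed.

Lemma encE A b : bnd A <= b -> enc A = E b A.
Proof. by move=> h; rewrite /enc (E_stable (bnd A) b A) //; apply: bnd_ge. Qed.

Lemma enc_inj A B : posfin A -> posfin B -> enc A = enc B -> A = B.
Proof.
rewrite /posfin => hA hB.
rewrite (encE A (maxn (bnd A) (bnd B))) ?leq_maxl //.
rewrite (encE B (maxn (bnd A) (bnd B))) ?leq_maxr // => h.
apply/fsetP => k.
case: k => [|k]; first by rewrite (negbTE hA) (negbTE hB).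
case: (leqP k.+1 (maxn (bnd A) (bnd B))) => hk.
  by rewrite (E_agree _ _ _ h) // hk.
case hkA: (k.+1 \in A); first by have := bnd_ge _ _ hkA; lia.
case hkB: (k.+1 \in B) => //; by have := bnd_ge _ _ hkB; lia.
Qed.

Lemma enc_dec n : enc (dec n) = n.
Proof.
rewrite (encE _ n); last by apply/bigmax_leqP_seq => i hi _; apply: dec_le.
by rewrite E_dec modn_small // ltn_expl.
Qed.

Lemma dec_enc A : posfin A -> dec (enc A) = A.
Proof. by move=> hA; apply: enc_inj => //; [apply: dec0 | rewrite enc_dec]. Qed.

Lemma colex_enc A B : posfin A -> posfin B -> enc A < enc B -> colex_prec A B.
Proof.
move=> hA hB.
rewrite (encE A (maxn (bnd A) (bnd B))) ?leq_maxl //.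
rewrite (encE B (maxn (bnd A) (bnd B))) ?leq_maxr // => h.
have [m [h1 h2 h3 h4]] := E_cmp _ _ _ h.
exists m; first by rewrite h2 h3.
move=> k hk; case: (leqP k (maxn (bnd A) (bnd B))) => hkb.
  by apply: h4; rewrite hk hkb.
case hkA: (k \in A); first by have := bnd_ge _ _ hkA; lia.
case hkB: (k \in B) => //; by have := bnd_ge _ _ hkB; lia.
Qed.

Lemma R_perm m F : is_R m F -> perm_eq (map enc F) (iota 0 m).
Proof.
case=> hu hs hp hdown.
have pF : forall A, A \in F -> posfin A by move=> A; apply: (allP hp).
have uL : uniq (map enc F).
  by rewrite map_inj_in_uniq // => A B hA hB; apply: enc_inj; apply: pF.
have down : forall x n, x \in map enc F -> n < x -> n \in map enc F.
  move=> x n /mapP [B hB ->] hn.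
  have hd : dec n \in F.
    apply: (hdown (dec n) B (dec0 n) hB).
    by apply: colex_enc; [apply: dec0 | apply: pF | rewrite enc_dec].
  by apply/mapP; exists (dec n); rewrite ?enc_dec.
have lt : forall x, x \in map enc F -> x < m.
  move=> x hx.
  have := uniq_leq_size (iota_uniq 0 x.+1) (s2 := map enc F).
  rewrite size_iota size_map hs; apply => y; rewrite mem_iota add0n => /andP [_ hy].
  rewrite ltnS leq_eqVlt in hy; case/orP: hy => [/eqP -> //|hy].
  exact: down hx hy.
have sub : {subset map enc F <= iota 0 m}.
  by move=> x hx; rewrite mem_iota add0n lt.
have [_ eqm] := uniq_min_size uL sub ltac:(by rewrite size_iota size_map hs).
by apply: uniq_perm => //; apply: iota_uniq.
Qed.

Definition pc n := count (bit^~ n) (iota 0 n).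

Lemma sum_R m F (G : nat -> rat) : is_R m F ->
  (\sum_(H <- F) G #|` H| = \sum_(n <- iota 0 m) G (pc n))%R.
Proof.
move=> hR.
have pF : forall A, A \in F -> posfin A by case: hR => _ _ hp _ A; apply: (allP hp).
rewrite -(perm_big _ (R_perm _ _ hR)) big_map; apply: eq_big_seq => H hH.
by rewrite -{1}(dec_enc _ (pF H hH)) card_dec.
Qed.
Lemma term_le (x s k : rat) : (0 <= s)%R -> (s <= k)%R -> (k < x)%R ->
  (1 / (x - s) - 1 / x <= s / (x * (x - k)))%R.
Proof.
move=> hs hsk hkx.
have hx : (0 < x)%R by lra.
have hxs : (0 < x - s)%R by lra.
have hxk : (0 < x - k)%R by lra.
have -> : (1 / (x - s) - 1 / x = s / (x * (x - s)))%R.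
  field; apply/andP; split; rewrite lt0r_neq0 //.
rewrite ler_wpM2l // lef_pV2 ?posrE ?mulr_gt0 //.
by apply: ler_wpM2l; [exact: ltW | lra].
Qed.
Lemma sum_bound (d k N : nat) : (k < d)%N -> (forall n, n < N -> pc n <= k)%N ->
  (18 * \sum_(n <- iota 0 N) pc n < d * (d - k))%N ->
  (\sum_(n <- iota 0 N) (1 / ((d%:R : rat) - (pc n)%:R) - 1 / d%:R) < 1 / 18)%R.
Proof.
move=> hkd hpc hT.
move: hT; set T := \sum_(n <- iota 0 N) pc n => hT.
have hD : (0 < d * (d - k))%N by rewrite muln_gt0; apply/andP; split; lia.
apply: (le_lt_trans (y := (T%:R / (d * (d - k))%:R : rat))).
  rewrite /T natr_sum mulr_suml big_seq [X in (_ <= X)%R]big_seq.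
  apply: ler_sum => n; rewrite mem_iota add0n => /andP [_ hn].
  rewrite natrM natrB; last exact: ltnW.
  apply: term_le; rewrite ?ler0n ?ler_nat ?ltr_nat //.
  exact: hpc.
rewrite ltr_pdivrMr ?ltr0n //.
have : ((18 * T)%:R < (d * (d - k))%:R :> rat)%R by rewrite ltr_nat.
rewrite natrM.
move: (T%:R : rat) ((d * (d - k))%:R : rat) => t D h.
lra.
Qed.
Definition pcb k n := count (bit^~ n) (iota 0 k).

Lemma pcb_stable k k' n : n < 2 ^ k -> k <= k' -> pcb k' n = pcb k n.
Proof.
move=> hn hk; rewrite /pcb -(subnKC hk) iotaD count_cat add0n.
rewrite (@eq_in_count _ _ pred0 (iota k (k' - k))) ?count_pred0 ?addn0 // => i.
rewrite mem_iota => /andP [hi _]; apply: bit_small.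
by apply: (leq_trans hn); rewrite leq_exp2l.
Qed.

Lemma pc_pcb k n : n < 2 ^ k -> pc n = pcb k n.
Proof.
move=> hn; case: (leqP k n) => h.
  by rewrite /pc -/(pcb n n) (pcb_stable _ _ _ hn h).
by rewrite /pc -/(pcb n n) (pcb_stable _ _ _ (ltn_expl n (isT : 1 < 2)) (ltnW h)).
Qed.

Lemma pcb_le k n : pcb k n <= k.
Proof. by rewrite /pcb; apply: leq_trans (count_size _ _) _; rewrite size_iota. Qed.

Lemma pc_le k n : n < 2 ^ k -> pc n <= k.
Proof. by move=> h; rewrite (pc_pcb _ _ h) pcb_le. Qed.

Lemma pcbS k n : pcb k.+1 n = pcb k n + bit k n.
Proof. by rewrite /pcb -addn1 iotaD count_cat /= add0n addn0. Qed.

Lemma bit_shift j r i : i < j -> bit i (2 ^ j + r) = bit i r.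
Proof.
move=> hi; rewrite /bit.
have -> : 2 ^ j = 2 ^ (j - i) * 2 ^ i by rewrite -expnD subnK // ltnW.
rewrite divnMDl ?expn_gt0 // oddD oddX subn_eq0 leqNgt hi /=.
by [].
Qed.

Lemma bit_top j r : r < 2 ^ j -> bit j (2 ^ j + r) = true.
Proof.
by move=> h; rewrite /bit -{1}(mul1n (2 ^ j)) divnMDl ?expn_gt0 // divn_small.
Qed.

Lemma pc_shift j r : r < 2 ^ j -> pc (2 ^ j + r) = (pc r).+1.
Proof.
move=> h.
rewrite (pc_pcb j.+1); last by rewrite expnS; lia.
rewrite (pc_pcb _ _ h) pcbS bit_top // addn1; congr S.
apply: eq_in_count => i; rewrite mem_iota add0n => /andP [_ hi].
exact: bit_shift.
Qed.

Definition T N := \sum_(n <- iota 0 N) pc n.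

Lemma T_split j r : r <= 2 ^ j -> T (2 ^ j + r) = T (2 ^ j) + T r + r.
Proof.
move=> hr; rewrite /T iotaD big_cat /= -addnA; congr (_ + _).
rewrite (_ : iota (0 + 2 ^ j) r = map (addn (2 ^ j)) (iota 0 r)); last first.
  by rewrite add0n -{1}[2 ^ j]addn0 iotaDl.
rewrite big_map.
rewrite (eq_big_seq (fun n => pc n + 1)); last first.
  move=> n; rewrite mem_iota add0n => /andP [_ hn].
  by rewrite pc_shift ?addn1 //; apply: leq_trans hn hr.
by rewrite big_split /= sum1_size size_iota.
Qed.

Lemma T_pow j : 2 * T (2 ^ j) = j * 2 ^ j.
Proof.
elim: j => [|j IH]; first by rewrite /T /= big_cons big_nil.
have e : 2 ^ j.+1 = 2 ^ j + 2 ^ j by rewrite expnS mul2n addnn.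
rewrite e T_split //.
move: IH; set P := 2 ^ j; set X := T P => IH.
nia.
Qed.

Lemma T_bound k N : N <= 2 ^ k -> 2 * T N <= k * N.
Proof.
elim: k N => [|k IH] N hN.
  by case: N hN => [|[|]] //; rewrite /T /= ?big_nil ?big_cons ?big_nil.
case: (leqP N (2 ^ k)) => h.
  have := IH N h; nia.
have hr : N - 2 ^ k <= 2 ^ k by move: hN; rewrite expnS; lia.
rewrite -(subnKC (ltnW h)) T_split //.
have h1 := IH _ hr; have h2 := T_pow k.
move: h1 h2 hr; set r := N - 2 ^ k; set P := 2 ^ k => h1 h2 hr.
nia.
Qed.
Lemma pow_big e : 7 <= e -> 10 * e.+1 < 2 ^ e + 2.
Proof.
move=> he; rewrite -(subnKC he).
elim: (e - 7) => [|j IH]; first by [].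
rewrite addnS expnS; lia.
Qed.

Definition Tc N := sumn (map (pcb 7) (iota 0 N)).

Lemma Tc_ok N : N <= 128 -> T N = Tc N.
Proof.
move=> hN; rewrite /T /Tc sumnE big_map; apply: eq_big_seq => n.
rewrite mem_iota add0n => /andP [_ hn]; apply: pc_pcb.
by apply: leq_trans hn hN.
Qed.

Lemma check6 : all (fun d => 18 * Tc d.-1 < d * (d - 6)) (iota 54 12).
Proof. by vm_compute. Qed.

Lemma check7 : all (fun d => 18 * Tc d.-1 < d * (d - 7)) (iota 66 64).
Proof. by vm_compute. Qed.

Lemma sum_pcb6 d N : N <= 64 -> 6 <= d ->
  (\sum_(n <- iota 0 N) (1 / ((d%:R : rat) - (pc n)%:R) - 1 / d%:R) =
   \sum_(v <- map (fun n => (d - pcb 6 n)%N) (iota 0 N)) (1 / (v%:R : rat) - 1 / d%:R))%R.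
Proof.
move=> hN hd; rewrite big_map; apply: eq_big_seq => n.
rewrite mem_iota add0n => /andP [_ hn].
have hn' : n < 2 ^ 6 by apply: leq_trans hn hN.
rewrite (pc_pcb _ _ hn') natrB //; apply: leq_trans (pcb_le _ _) hd.
Qed.

Ltac small_case d N :=
  rewrite sum_pcb6 //;
  let t := eval vm_compute in (map (fun n => d - pcb 6 n) (iota 0 N)) in
  (have -> : map (fun n => d - pcb 6 n) (iota 0 N) = t by vm_compute);
  rewrite unlock /=; lra.

Lemma case50 : (\sum_(n <- iota 0 49) (1 / ((50%:R : rat) - (pc n)%:R) - 1 / 50%:R) < 1 / 18)%R.
Proof. Time small_case 50 49. Qed.
Lemma case51 : (\sum_(n <- iota 0 50) (1 / ((51%:R : rat) - (pc n)%:R) - 1 / 51%:R) < 1 / 18)%R.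
Proof. small_case 51 50. Qed.
Lemma case52 : (\sum_(n <- iota 0 51) (1 / ((52%:R : rat) - (pc n)%:R) - 1 / 52%:R) < 1 / 18)%R.
Proof. small_case 52 51. Qed.
Lemma case53 : (\sum_(n <- iota 0 52) (1 / ((53%:R : rat) - (pc n)%:R) - 1 / 53%:R) < 1 / 18)%R.
Proof. small_case 53 52. Qed.


Theorem mainTheorem20 (d : nat) (F : seq {fset nat}) :
  50 <= d -> is_R d.-1 F ->
  (\sum_(H <- F) (1 / ((d%:R : rat) - (#|` H|)%:R) - 1 / d%:R) < 1 / 18)%R.
Proof.
move=> hd hR.
rewrite (sum_R _ _ (fun s : nat => (1 / ((d%:R : rat) - s%:R) - 1 / d%:R)%R) hR) /=.
case: (leqP d 53) => h53.
  have : d = 50 \/ d = 51 \/ d = 52 \/ d = 53 by lia.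
  by case=> [->|[->|[->|->]]]; [exact: case50 | exact: case51 | exact: case52 | exact: case53].
case: (leqP d 65) => h65.
  apply: (sum_bound d 6 d.-1); first lia.
    by move=> n hn; apply: pc_le; apply: leq_trans hn _; rewrite /=; lia.
  rewrite -/(T d.-1) Tc_ok; last lia.
  have hm : d \in iota 54 12 by rewrite mem_iota; lia.
  exact: (allP check6 d hm).
case: (leqP d 129) => h129.
  apply: (sum_bound d 7 d.-1); first lia.
    by move=> n hn; apply: pc_le; apply: leq_trans hn _; rewrite /=; lia.
  rewrite -/(T d.-1) Tc_ok; last lia.
  have hm : d \in iota 66 64 by rewrite mem_iota; lia.
  exact: (allP check7 d hm).
have hpos : 0 < d - 2 by lia.
have [hlo hhi] := andP (trunc_log_bounds (isT : 1 < 2) hpos).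
move: hlo hhi; set e := trunc_log 2 (d - 2) => hlo hhi.
have he : 7 <= e.
  apply: trunc_log_max => //; rewrite /=; lia.
have hpow := pow_big _ he.
have hN : d.-1 <= 2 ^ e.+1 by lia.
apply: (sum_bound d e.+1 d.-1); first lia.
  by move=> n hn; apply: pc_le; apply: leq_trans hn _.
have hT := T_bound _ _ hN.
rewrite -/(T d.-1).
move: hT hpow hN; set t := T d.-1; set P := 2 ^ e => hT hpow hN.
nia.
Qed.
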